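(* There are at least $2^{\mathfrak d}$ many totally imperfect Menger subsets of $2^\omega$.
   Context: $\mathfrak d$ is the least size of a dominating family in $(\omega^\omega,\le^* )$, where $a\le^*b$ means $\{n:a(n)>b(n)\}$ is finite. Menger: for every sequence $(\mathcal U_n)$ of open covers there are finite $\mathcal F_n\subseteq\mathcal U_n$ with $\bigcup_n\mathcal F_n$ a cover. Totally imperfect: contains no homeomorphic copy of $2^\omega$. *)

(* Defs.v *)
From HB Require Import structures.
From mathcomp Require Import all_boot all_order all_algebra.
From mathcomp Require Import all_classical all_reals all_analysis.
Set Implicit Arguments. Unset Strict Implicit. Unset Printing Implicit Defensive.
Local Open Scope classical_set_scope.

Definition le_star (a b : nat -> nat) : Prop := finite_set [set n | (b n < a n)%N].

Definition dominating (D : set (nat -> nat)) : Prop :=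
  forall f : nat -> nat, exists2 g, D g & le_star f g.

(* D is a dominating family of least size, i.e. |D| = d *)
Definition min_dominating (D : set (nat -> nat)) : Prop :=
  dominating D /\ forall D', dominating D' -> (D #<= D')%card.

Definition Menger (X : set cantor_space) : Prop :=
  forall U : nat -> set (set cantor_space),
    (forall n, (forall V, U n V -> open V) /\ X `<=` \bigcup_(V in U n) V) ->
    exists F : nat -> set (set cantor_space),
      (forall n, finite_set (F n) /\ F n `<=` U n) /\
      X `<=` \bigcup_n \bigcup_(V in F n) V.

(* X contains a homeomorphic copy of 2^omega: an embedding f of 2^omega
   (continuous, with continuous inverse on its image) whose image lies in X *)
Definition contains_cantor_copy (X : set cantor_space) : Prop :=
  exists (f g : cantor_space -> cantor_space),
    continuous f /\ cancel f g /\ {within range f, continuous g} /\ range f `<=` X.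

Definition totally_imperfect (X : set cantor_space) : Prop :=
  ~ contains_cantor_copy X.

(* Main.v *)
Require Import Defs.
From HB Require Import structures.
From mathcomp Require Import all_boot all_order all_algebra.
From mathcomp Require Import all_classical all_reals all_analysis.
From mathcomp Require Import wochoice finmap.
Local Open Scope classical_set_scope.

Lemma coord_open (i : nat) (P : set bool) :
  open [set x : cantor_space | P (x i)].
Proof.
have -> : [set x : cantor_space | P (x i)] =
  (@proj nat (fun _ => bool) i) @^-1` P by [].
apply: open_comp; [move=> + _; exact: proj_continuous | exact: discrete_open].
Qed.

Lemma coord_closed (i : nat) (P : set bool) :
  closed [set x : cantor_space | P (x i)].
Proof.
rewrite -openC.
have -> : ~` [set x : cantor_space | P (x i)] = [set x : cantor_space | (~` P) (x i)] by [].
exact: coord_open.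
Qed.

Definition fmax (D' : {fset nat}) := \max_(j <- D') j.

Lemma max_fset_bound (D' : {fset nat}) i : i \in D' -> (i <= fmax D')%N.
Proof. by move=> iD; apply: (@leq_bigmax_seq _ _ xpredT (fun j => j)). Qed.

Lemma cyl_lemma (V : set cantor_space) (z : cantor_space) :
  open V -> V z -> exists L, forall x : cantor_space,
    (forall i, (i < L)%N -> x i = z i) -> V x.
Proof.
move=> oV Vz.
have cK : compact (~` V).
  apply: (subclosed_compact (open_closedC oV) cantor_space_compact).
  by [].
rewrite compact_cover in cK.
have [D' _ HD'] : finite_subset_cover setT
    (fun i => [set x : cantor_space | x i != z i]) (~` V).
  apply: cK.
  - by move=> i _; apply: (coord_open i (fun b => b != z i)).
  - move=> y nVy; apply: contrapT => ncov; apply: nVy.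
    suff -> : y = z by [].
    apply: functional_extensionality_dep => i; apply/eqP; apply: contrapT => /negP yi.
    by apply: ncov; exists i.
exists (fmax D').+1 => x xz; apply: contrapT => nVx.
have [i /= iD /eqP] := HD' x nVx; apply; apply: xz.
by rewrite ltnS; apply: max_fset_bound.
Qed.

Definition cylS (s : seq bool) : set cantor_space :=
  [set x | forall i, (i < size s)%N -> x i = nth false s i].

Lemma cylS_mkseq (z : cantor_space) L : cylS (mkseq z L) z.
Proof. by move=> i; rewrite size_mkseq => iL; rewrite nth_mkseq. Qed.

Lemma not_dom {D' : set (nat -> nat)} : ~ dominating D' ->
  exists f0, forall g, D' g -> ~ le_star f0 g.
Proof.
move=> nd; apply: contrapT => H; apply: nd => f1; apply: contrapT => H1.
by apply: H; exists f1 => g Dg lg; apply: H1; exists g.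
Qed.

Lemma small_cover (D : set (nat -> nat)) (Z : set cantor_space)
  (U : nat -> set (set cantor_space)) :
  (forall D', dominating D' -> (D #<= D')%card) -> ~ (D #<= Z)%card ->
  (forall n V, U n V -> open V) -> (forall n, Z `<=` \bigcup_(V in U n) V) ->
  exists F : nat -> set (set cantor_space),
    (forall n, finite_set (F n) /\ F n `<=` U n) /\
    Z `<=` \bigcup_n \bigcup_(V in F n) V.
Proof.
move=> HD smallZ oU covU.
have choiceL : forall n (z : cantor_space), exists L, Z z ->
    exists V, U n V /\ cylS (mkseq z L) `<=` V.
  move=> n z; have [Zz|nZz] := pselect (Z z); last by exists 0%N.
  have [V UV Vz] := covU n z Zz.
  have [L HL] := @cyl_lemma V z (oU n V UV) Vz.
  exists L => _; exists V; split => // x Hx; apply: HL => i iL.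
  by have := Hx i; rewrite size_mkseq nth_mkseq //; apply.
pose Lf n z := projT1 (cid (choiceL n z)).
have HLf n z : Z z -> exists V, U n V /\ cylS (mkseq z (Lf n z)) `<=` V.
  exact: (projT2 (cid (choiceL n z))).
pose f (z : cantor_space) : nat -> nat := fun n => choice.pickle (mkseq z (Lf n z)).
have nd : ~ dominating (f @` Z).
  move=> dom; apply: smallZ; exact: card_le_trans (HD _ dom) (card_image_le f Z).
have [f0 Hf0] := not_dom nd.
pose W n (s : seq bool) : set cantor_space :=
  if pselect (exists V, U n V /\ cylS s `<=` V) is left H then projT1 (cid H)
  else set0.
have HW n s : (exists V, U n V /\ cylS s `<=` V) -> U n (W n s) /\ cylS s `<=` W n s.
  move=> H; rewrite /W; case: pselect => // H'; exact: (projT2 (cid H')).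
exists (fun n => [set V | U n V /\ exists2 c, (c < f0 n)%N &
                   exists s, choice.unpickle c = Some s /\ V = W n s]); split.
  move=> n; split; last by move=> V [].
  apply: (@sub_finite_set _ _
    ((fun c => if choice.unpickle c is Some s then W n s else set0) @` `I_(f0 n))).
    move=> V [_ [c cf [s [cs ->]]]].
    exists c => //; by rewrite cs.
  apply: finite_image; exact: finite_II.
move=> z Zz.
have nls := Hf0 (f z) (ex_intro2 _ _ z Zz erefl).
have [n nf] : exists n, (f z n < f0 n)%N.
  apply: contrapT => H; apply: nls; rewrite /le_star.
  suff -> : [set n | (f z n < f0 n)%N] = set0 by exact: finite_set0.
  by apply/seteqP; split => // m /= Hm; apply: H; exists m.
have [Hu Hc] := HW n (mkseq z (Lf n z)) (HLf n z Zz).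
exists n => //; exists (W n (mkseq z (Lf n z))); last by apply: Hc; exact: cylS_mkseq.
split => //; exists (f z n) => //; exists (mkseq z (Lf n z)); split => //.
by rewrite /f choice.pickleK.
Qed.

Definition Bd (G : nat -> nat) (x : cantor_space) :=
  forall k, exists j, (k <= j <= G k)%N /\ x j.

Definition pt (s : seq bool) : cantor_space := fun i => nth false s i.

Lemma gap_cover (U : nat -> set (set cantor_space)) :
  (forall n V, U n V -> open V) -> (forall n s, exists2 V, U n V & V (pt s)) ->
  exists (F : nat -> set (set cantor_space)) (G : nat -> nat),
    (forall n, finite_set (F n) /\ F n `<=` U n) /\
    forall x, ~ (\bigcup_n \bigcup_(V in F n) V) x -> Bd G x.
Proof.
move=> oU covU.
have choiceVL n s : exists p : set cantor_space * nat, U n p.1 /\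
    forall x : cantor_space, (forall i, (i < p.2)%N -> x i = nth false s i) -> p.1 x.
  have [V UV Vs] := covU n s.
  have [L HL] := @cyl_lemma V (pt s) (oU n V UV) Vs.
  by exists (V, L).
pose VL n s := projT1 (cid (choiceVL n s)).
have HVL n s : U n (VL n s).1 /\
    forall x : cantor_space, (forall i, (i < (VL n s).2)%N -> x i = nth false s i) -> (VL n s).1 x.
  exact: (projT2 (cid (choiceVL n s))).
pose ell n m := \max_(t : m.-tuple bool) (VL n t).2.
pose fix ms k := if k is k'.+1 then maxn (ms k').+1 (ell k' (ms k')) else 0%N.
have msS k : ms k.+1 = maxn (ms k).+1 (ell k (ms k)) by [].
have msj j : (j <= ms j)%N.
  elim: j => // j IH; apply: leq_trans (leq_maxl (ms j).+1 (ell j (ms j))); by rewrite ltnS.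
pose F k := (fun t : (ms k).-tuple bool => (VL k t).1) @` setT.
exists F, (fun j => ms j.+1); split.
  move=> n; split; first exact/finite_image/finite_finset.
  by move=> V [t _ <-]; exact: (HVL n t).1.
have cover k (x : cantor_space) : (forall i, (ms k <= i < ms k.+1)%N -> x i = false) ->
    (\bigcup_(V in F k) V) x.
  move=> gap.
  have sz : size (mkseq x (ms k)) == ms k by rewrite size_mkseq.
  pose t := Tuple sz.
  exists (VL k t).1; first by exists t.
  apply: (HVL k t).2 => i iL.
  have [ilt|ige] := ltnP i (ms k).
    by rewrite /= nth_mkseq.
  rewrite /= nth_default ?size_mkseq //; apply: gap; rewrite ige /=.
  apply: leq_trans iL _; apply: leq_trans (leq_maxr (ms k).+1 (ell k (ms k))).
  exact: (@leq_bigmax _ (fun t : (ms k).-tuple bool => (VL k t).2) t).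
move=> x ncov j; apply: contrapT => H; apply: ncov; exists j => //.
apply: cover => i /andP [i1 i2]; apply/negbTE/negP => xi; apply: H; exists i.
split => //; rewrite (leq_trans (msj j) i1) /=; exact: ltnW.
Qed.

Definition Fin := [set x : cantor_space | exists N, forall m, (N <= m)%N -> x m = false].

Lemma homo_of {a : nat -> nat} : (forall i, a i < a i.+1)%N -> {homo a : m n / (m < n)%N}.
Proof. move=> aS; exact: (@homo_ltn _ a _ (fun y x z => @ltn_trans y x z) aS). Qed.

Lemma mono_of {a : nat -> nat} : (forall i, a i < a i.+1)%N -> {mono a : m n / (m < n)%N}.
Proof. by move=> aS; apply: leqW_mono; apply: leq_mono; exact: homo_of. Qed.

Lemma inj_of {a : nat -> nat} : (forall i, a i < a i.+1)%N -> injective a.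
Proof. by move=> aS; apply: incn_inj; apply: leq_mono; exact: homo_of. Qed.

Lemma incr_range_eq (a b : nat -> nat) :
  (forall i, a i < a i.+1)%N -> (forall i, b i < b i.+1)%N ->
  (forall m, (exists n, a n = m) <-> (exists n, b n = m)) -> a = b.
Proof.
move=> aS bS Hr; have ma := mono_of aS; have mb := mono_of bS.
apply: funext => n; elim/ltn_ind: n => n IH.
have [p bp] := (Hr (a n)).1 (ex_intro _ n erefl).
case: (ltngtP p n) => [pn|np|E]; last by rewrite -bp E.
- have : a p = a n by rewrite IH.
  by move/(inj_of aS) => E; move: pn; rewrite E ltnn.
- have [q aq] := (Hr (b n)).2 (ex_intro _ n erefl).
  have : (a q < a n)%N by rewrite aq -bp mb.
  rewrite ma => qn.
  have : b q = b n by rewrite -IH.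
  by move/(inj_of bS) => E; move: qn; rewrite E ltnn.
Qed.

Fixpoint cc (h : nat -> nat) n := if n is n'.+1 then (cc h n' + h n).+1 else h 0.

Definition codeh (h : nat -> nat) : cantor_space := fun m => `[< exists n, cc h n = m >].

Lemma ccS h n : (cc h n < cc h n.+1)%N.
Proof. by rewrite /= ltnS leq_addr. Qed.

Lemma cc_ge h n : (h n <= cc h n)%N.
Proof. by case: n => //= n; rewrite ltnW // ltnS leq_addl. Qed.

Lemma cc_geid h n : (n <= cc h n)%N.
Proof. by elim: n => // n IH; apply: leq_trans (ccS h n). Qed.

Lemma codeh_inj : injective codeh.
Proof.
move=> h h' E.
have Ecc : cc h = cc h'.
  apply: incr_range_eq; [exact: ccS | exact: ccS |] => m.
  have := congr1 (fun x : cantor_space => x m) E; rewrite /codeh => /= E'.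
  split => H.
    have : `[< exists n, cc h n = m >] by apply/asboolP.
    by rewrite E' => /asboolP.
  have : `[< exists n, cc h' n = m >] by apply/asboolP.
  by rewrite -E' => /asboolP.
apply: funext => n; case: n => [|n]; first exact: (congr1 (fun f => f 0%N) Ecc).
have := congr1 (fun f => f n.+1) Ecc; have := congr1 (fun f => f n) Ecc => /= -> [].
by move/addnI.
Qed.

Lemma codeh_notFin h : ~ Fin (codeh h).
Proof.
move=> [N HN]; have := HN (cc h N) (cc_geid h N).
by rewrite /codeh; move/asboolP; apply; exists N.
Qed.

Fixpoint runmax (G : nat -> nat) k := if k is k'.+1 then maxn (runmax G k') (G k) else G 0.

Lemma runmax_ge G k : (G k <= runmax G k)%N.
Proof. by case: k => //= k; exact: leq_maxr. Qed.

Lemma runmax_mono G : {homo runmax G : m n / (m <= n)%N}.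
Proof.
apply: (@homo_leq _ (runmax G) _ (@leqnn) (fun y x z => @leq_trans y x z)).
by move=> i /=; exact: leq_maxl.
Qed.

Fixpoint TB (G : nat -> nat) n := if n is n'.+1 then runmax G (TB G n').+1 else runmax G 0.

Lemma Bd_codeh G h : Bd G (codeh h) -> forall n, (h n <= TB G n)%N.
Proof.
move=> B n; apply: leq_trans (cc_ge h n) _.
have mcc := mono_of (ccS h).
have mcl := leq_mono (homo_of (ccS h)).
elim: n => [|n IH].
  have [j [/andP [_ jG] /asboolP [p pj]]] := B 0%N.
  apply: leq_trans (runmax_ge G 0); apply: leq_trans jG; rewrite -pj.
  by rewrite mcl.
have [j [/andP [j1 jG] /asboolP [p pj]]] := B (cc h n).+1.
have np : (n < p)%N by rewrite -mcc pj.
have : (cc h n.+1 <= j)%N.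
  by rewrite -pj mcl.
move=> cj; apply: leq_trans cj _; apply: leq_trans jG _.
apply: leq_trans (runmax_ge G _) _; apply: runmax_mono; by rewrite ltnS.
Qed.

Section WO.
Variable T : eqType.
Variable R : rel T.
Hypothesis wR : well_order R.

Lemma wo_refl a : R a a.
Proof.
have [|z [[za lbz] _]] := wR (pred1 a); first by exists a; rewrite inE.
by move: za; rewrite inE => /eqP zE; rewrite -zE; apply: lbz; rewrite inE zE.
Qed.

Lemma wo_antisym a b : R a b -> R b a -> a = b.
Proof.
move=> ab ba.
have [|z [_ uz]] := wR (pred2 a b); first by exists a; rewrite inE eqxx.
have ma : minimum_of R (pred2 a b) a.
  split; first by rewrite inE eqxx.
  by move=> x; rewrite inE => /orP [] /eqP ->; rewrite ?wo_refl.
have mb : minimum_of R (pred2 a b) b.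
  split; first by rewrite inE eqxx orbT.
  by move=> x; rewrite inE => /orP [] /eqP ->; rewrite ?wo_refl.
by have := uz _ ma; have := uz _ mb; move=> <- <-.
Qed.

Lemma wo_total a b : R a b \/ R b a.
Proof.
have [|z [[za lbz] _]] := wR (pred2 a b); first by exists a; rewrite inE eqxx.
move: za; rewrite inE => /orP [] /eqP <-.
  by left; apply: lbz; rewrite inE eqxx orbT.
by right; apply: lbz; rewrite inE eqxx.
Qed.
End WO.

Lemma index_exists (D : set (nat -> nat)) : min_dominating D ->
  exists (I : set (nat -> nat)) (lt : (nat -> nat) -> (nat -> nat) -> Prop)
         (iota : (nat -> nat) -> (nat -> nat)),
   [/\ I `<=` D,
       (forall i, I i -> ~ (D #<= [set j | I j /\ lt j i])%card),
       (forall i j, [\/ lt i j, i = j | lt j i]),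
       set_inj D iota & set_fun D I iota].
Proof.
move=> [domD minD].
have [R wR] := @well_ordering_principle (nat -> nat).
pose lt (i j : nat -> nat) := R i j /\ i <> j.
pose segD x := [set y | D y /\ lt y x].
pose I := [set x | D x /\ ~ (D #<= segD x)%card].
have ID : I `<=` D by move=> x [].
have small i : I i -> ~ (D #<= [set j | I j /\ lt j i])%card.
  move=> [_ Hi] H; apply: Hi; apply: (card_le_trans H); apply: subset_card_le.
  by move=> j [[Dj _] lji].
have tot i j : [\/ lt i j, i = j | lt j i].
  have [->|nij] := pselect (i = j); first by constructor 2.
  case: (@wo_total _ _ wR i j) => H; [constructor 1 | constructor 3]; split => //.
  by move=> E; apply: nij.
have DI : (D #<= I)%card.
  have [[x0 Bx0]|nB] := pselect (nonempty [pred x | `[< D x /\ (D #<= segD x)%card >]]); last first.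
    apply: subset_card_le => x Dx; split => // H; apply: nB; exists x.
    by rewrite inE /=; apply/asboolP; split.
  have [z [[zB lbz] _]] := wR _ (ex_intro _ x0 Bx0).
  move: zB; rewrite inE /= => /asboolP -[Dz Hz].
  apply: (card_le_trans Hz); apply: subset_card_le => y [Dy [Ryz nyz]].
  split => // Hy; apply: nyz; apply: (@wo_antisym _ _ wR _ _ Ryz); apply: lbz.
  by rewrite inE /=; apply/asboolP; split.
have /pcard_leP/injfunPex [iota fi ii] := DI.
by exists I, lt, iota; split.
Qed.

Lemma inj_le T U (A : set T) (B : set U) (f : T -> U) :
  {in A &, injective f} -> (forall a, A a -> B (f a)) -> (A #<= B)%card.
Proof.
move=> fi fAB.
have /card_eqPle [_ H] := inj_card_eq fi.
apply: (card_le_trans H); apply: subset_card_le => y [a Aa <-]; exact: fAB.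
Qed.

Lemma le_star_trans a b c : le_star a b -> le_star b c -> le_star a c.
Proof.
move=> ab bc; rewrite /le_star.
apply: (@sub_finite_set _ _ ([set n | (b n < a n)%N] `|` [set n | (c n < b n)%N])).
  move=> n /= cn; have [bn|nb] := ltnP (b n) (a n); [by left | right].
  exact: (leq_trans cn nb).
by rewrite finite_setU; split.
Qed.

Lemma Bd_notFin G y : Bd G y -> ~ Fin y.
Proof. by move=> B [N HN]; have [j [/andP [Nj _] yj]] := B N; move: yj; rewrite HN. Qed.

Lemma pt_Fin s : Fin (pt s).
Proof. by exists (size s) => m sm; rewrite /pt nth_default. Qed.

Theorem mainTheorem10 (D : set (nat -> nat)) :
  min_dominating D ->
  ([set A : set (nat -> nat) | A `<=` D] #<=
     [set X : set cantor_space | totally_imperfect X /\ Menger X])%card.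
Proof.
move=> mD; have [domD minD] := mD.
have [I [lt [iota [ID smallI tot injI funI]]]] := @index_exists D mD.
pose e (g : nat -> nat) : nat -> nat :=
  if pselect (exists d, D d /\ iota d = g) is left H then projT1 (cid H) else g.
have eiota d : D d -> e (iota d) = d.
  move=> Dd; rewrite /e; case: pselect => [H|[]]; last by exists d.
  have [Dd' Ed'] := projT2 (cid H).
  by apply: injI; rewrite ?mem_set.
have hex i : exists h' : nat -> nat, I i ->
    forall j, I j -> lt j i -> ~ le_star h' (e j).
  have [Ii|nIi] := pselect (I i); last by exists id.
  have nd : ~ dominating (e @` [set j | I j /\ lt j i]).
    move=> dom; apply: (smallI i Ii).
    exact: card_le_trans (minD _ dom) (card_image_le _ _).
  have [f0 Hf0] := not_dom nd.
  by exists f0 => _ j Ij lji; apply: Hf0; exists j.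
pose h' i := projT1 (cid (hex i)).
have Hh' i : I i -> forall j, I j -> lt j i -> ~ le_star (h' i) (e j).
  exact: (projT2 (cid (hex i))).
pose h i n := maxn (h' i n) (e i n).+1.
have H1 i j : I i -> I j -> lt j i -> ~ le_star (h i) (e j).
  move=> Ii Ij lji ls; apply: (Hh' i Ii j Ij lji).
  apply: sub_finite_set ls => n /= en.
  exact: (leq_trans en (leq_maxl _ _)).
have H2 i : ~ le_star (h i) (e i).
  move=> ls; apply: infinite_nat; apply: sub_finite_set ls => n _ /=.
  exact: (leq_trans (leqnn _) (leq_maxr _ _)).
pose H i : nat -> nat := fun n => if odd n then i n./2 else h i n./2.
pose x i := codeh (H i).
have x_inj : injective x.
  move=> i j /codeh_inj E; apply: funext => n.
  have := congr1 (fun f => f n.*2.+1) E.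
  by rewrite /H /= odd_double /= uphalf_double.
have bnd G : exists2 g, I g & forall i, I i -> Bd G (x i) -> lt i g.
  pose T' n := TB G n.*2.
  have [d Dd ld] := domD T'.
  exists (iota d); first exact: funI.
  move=> i Ii B; have HB := @Bd_codeh G (H i) B.
  have lhi : le_star (h i) T'.
    rewrite /le_star; suff -> : [set n | (T' n < h i n)%N] = set0 by [].
    apply/seteqP; split => // n /=; rewrite ltnNge.
    have := HB n.*2; rewrite /H odd_double doubleK => -> //.
  have lhe : le_star (h i) (e (iota d)) by rewrite eiota //; exact: le_star_trans lhi ld.
  case: (tot i (iota d)) => // [E|lgi].
    by move: lhe; rewrite -E; move/H2.
  by exfalso; apply: (H1 i (iota d) Ii (funI d Dd) lgi).
have smallZ G (Z : set cantor_space) :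
    Z `<=` (fun y => Bd G y /\ exists2 i, I i & x i = y) -> ~ (D #<= Z)%card.
  move=> sZ DZ; have [g Ig Hg] := bnd G.
  apply: (smallI g Ig); apply: (card_le_trans DZ).
  apply: (card_le_trans _ (card_image_le x _)); apply: subset_card_le.
  move=> y /sZ [By [i Ii xi]]; exists i => //; split => //.
  by apply: Hg => //; rewrite xi.
pose Phi (A : set (nat -> nat)) := Fin `|` (x \o iota) @` A.
have Phi_sub A B : A `<=` D -> B `<=` D -> Phi A = Phi B -> A `<=` B.
  move=> AD BD E a Aa.
  have : Phi B (x (iota a)) by rewrite -E; right; exists a.
  case => [/codeh_notFin []|[b Bb /= /x_inj xb]].
  by have := injI b a (mem_set (BD b Bb)) (mem_set (AD a Aa)) xb => <-.
apply: (@inj_le _ _ _ _ Phi).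
  move=> A B; rewrite !in_setE => AD BD E.
  by apply/seteqP; split; apply: Phi_sub.
move=> A AD; split.
- move=> [f [g [fc [fg [gc rf]]]]].
  pose ptn n := pt (odflt [::] (choice.unpickle n)).
  pose A' := [set b : cantor_space | forall n, b n.*2.+1 = ~~ g (ptn n) n.*2.+1].
  have cA' : compact A'.
    apply: (subclosed_compact _ cantor_space_compact) => //.
    have -> : A' = \bigcap_(n in [set: nat])
        [set b : cantor_space | b n.*2.+1 = ~~ g (ptn n) n.*2.+1].
      by apply/seteqP; split => b Hb n => [_|]; apply: Hb.
    apply: closed_bigI => n _.
    exact: (coord_closed n.*2.+1 (fun v => v = ~~ g (ptn n) n.*2.+1)).
  have fnF b : A' b -> ~ Fin (f b).
    move=> Ab [N HN].
    have E : f b = pt (mkseq (f b) N).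
      apply: funext => i; rewrite /pt; have [iN|Ni] := ltnP i N; first by rewrite nth_mkseq.
      by rewrite nth_default ?size_mkseq // HN.
    have gb : g (ptn (choice.pickle (mkseq (f b) N))) = b.
      by rewrite /ptn choice.pickleK /= -E fg.
    by have := Ab (choice.pickle (mkseq (f b) N)); rewrite gb; case: (b _).
  have fX b : A' b -> exists2 i, I i & x i = f b.
    move=> Ab; have : Phi A (f b) := rf _ (imageT f b).
    case => [/(fnF b Ab) []|[a Aa <-]]; exists (iota a) => //; exact: funI (AD a Aa).
  have bound k : exists N, forall b, A' b -> exists j, (k <= j <= N)%N /\ f b j.
    rewrite compact_cover in cA'.
    have [D' _ HD'] : finite_subset_cover setT
        (fun N => \bigcup_(j in [set j | (k <= j <= N)%N]) [set b : cantor_space | f b j]) A'.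
      apply: cA'.
      - move=> N _; apply: bigcup_open => j _.
        exact: (open_comp (f := f) (D := [set y : cantor_space | y j])
                  (fun z _ => fc z) (coord_open j (fun v => v))).
      - move=> b Ab; have nF := fnF b Ab.
        have [m [km fm]] : exists m, (k <= m)%N /\ f b m.
          apply: contrapT => Hm; apply: nF; exists k => m km.
          by apply/negbTE/negP => fm; apply: Hm; exists m.
        by exists m => //; exists m => //; rewrite /= km leqnn.
    exists (fmax D') => b Ab; have [N /= ND [j /andP [kj jN] fbj]] := HD' b Ab.
    exists j; split => //; rewrite kj /=; exact: leq_trans jN (@max_fset_bound D' N ND).
  pose G k := projT1 (cid (bound k)).
  have BG b : A' b -> Bd G (f b) := fun Ab k => projT2 (cid (bound k)) b Ab.
  apply: (smallZ G (f @` A')).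
    by move=> y [b Ab <-]; split; [exact: BG | exact: fX].
  pose psi (b : cantor_space) : cantor_space :=
    fun k => if odd k then ~~ g (ptn k./2) k else b k./2.
  apply: (@card_le_trans _ _ _ [set: cantor_space]).
    by apply: (@inj_le _ _ _ _ codeh) => // a b _ _; exact: codeh_inj.
  apply: (@card_le_trans _ _ _ A').
    apply: (@inj_le _ _ _ _ psi).
      move=> a b _ _ E; apply: funext => n.
      by have := congr1 (fun z : cantor_space => z n.*2) E; rewrite /psi odd_double doubleK.
    by move=> b _ n; rewrite /psi /= odd_double /= uphalf_double.
  apply: (@inj_le _ _ _ _ f) => [a b _ _|b Ab]; [exact: (can_inj fg) | by exists b].
- move=> U HU.
  have oU n V : U n V -> open V := (HU n).1 V.
  have [F0 [G [HF0 gap]]] := @gap_cover (fun k => U k.*2) (fun n V UV => oU _ V UV)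
    (fun n s => (HU n.*2).2 _ (or_introl (pt_Fin s))).
  pose Z := [set y | Phi A y /\ ~ (\bigcup_n \bigcup_(V in F0 n) V) y].
  have sZ : Z `<=` (fun y => Bd G y /\ exists2 i, I i & x i = y).
    move=> y [Py ny]; have By := gap y ny; split => //.
    case: Py => [/(@Bd_notFin G y By) []|[a Aa <-]]; exists (iota a) => //; exact: funI (AD a Aa).
  have [F1 [HF1 covF1]] := @small_cover D Z (fun k => U k.*2.+1) minD (smallZ G Z sZ)
    (fun n V UV => oU n.*2.+1 V UV) (fun n y Zy => (HU n.*2.+1).2 y Zy.1).
  exists (fun n => if odd n then F1 n./2 else F0 n./2); split.
    move=> n; case: ifP => on.
      have E : (n./2).*2.+1 = n by have := odd_double_half n; rewrite on add1n.
      by case: (HF1 n./2) => f1 s1; split => //; move: s1; rewrite E.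
    have E : (n./2).*2 = n by have := odd_double_half n; rewrite on add0n.
    by case: (HF0 n./2) => f1 s1; split => //; move: s1; rewrite E.
  move=> y Py; have [cov|ncov] := pselect ((\bigcup_n \bigcup_(V in F0 n) V) y).
    case: cov => k _ Hk; exists k.*2 => //; rewrite /= odd_double doubleK; exact: Hk.
  have [k _ Hk] := covF1 y (conj Py ncov); exists k.*2.+1 => //.
  by rewrite /= odd_double /= uphalf_double.
Qed.
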